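(* Let $\sigma$ be a strongly erasing $k$-block substitution with $w_\epsilon\ne1^k$ that satisfies the optimality condition. Then $f_\sigma$ has $1/2$-sensitive dependence on initial conditions: for every $x\in\mathbb I$ and every $\delta>0$ there exist $z\in\mathbb I$ with $|x-z|<\delta$ and $n\in\mathbb N$ such that $|f_\sigma^n(x)-f_\sigma^n(z)|\ge 1/2$.
   Context: Notation: $\mathbb I=[0,1]$. $\{0,1\}^*$ and $\{0,1\}^\omega$ denote finite and infinite binary words, and $\epsilon$ is the empty word. For a word $w$, set $0.w=\sum_iw_i2^{-i}$. For $x\in(0,1]$, $\widetilde x$ is the unique infinite binary expansion of $x$ not ending in $0^\infty$. Fix $k\ge2$. An erasing $k$-block substitution is a map $\sigma:\{0,1\}^k\to\{0,1\}^*$ with exactly one block $w_\epsilon$ such that $\sigma(w_\epsilon)=\epsilon$. It acts blockwise on infinite words and on finite words of length a multiple of $k$. $k$-rounding: a $k$-rounding of $w$ is any word $wv$ whose length is the least multiple of $k$ that is $\ge|w|$; if $|w|$ is a multiple of $k$, the only $k$-rounding of $w$ is $w$. $\sigma$ is strongly erasing if for every $w\in\{0,1\}^*$ there exist $n\in\mathbb N$ and words $r_0,\dots,r_{n-1}$ such that $r_0$ is a $k$-rounding of $w$, $r_j$ is a $k$-rounding of $\sigma(r_{j-1})$ for $1\le j\le n-1$, and $\sigma(r_{n-1})=\epsilon$. The map $f_\sigma:\mathbb I\to\mathbb I$ is defined by $f_\sigma(x)=0.\sigma(\widetilde x)$ if $x\in(0,1]$ and $\widetilde x\neq w_\epsilon^\infty$,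 and $f_\sigma(x)=0$ otherwise. Optimality condition: every $w\in\{0,1\}^\omega$ can be written as $w=\prod_{i\ge1}\sigma(b_i)$ with blocks $b_i\in\{0,1\}^k$ satisfying $\sigma(b_i)\ne\epsilon$. *)

(* Defs.v *)
From Stdlib Require Import Reals ClassicalEpsilon.
From Coquelicot Require Import Coquelicot.
From mathcomp Require Import ssreflect ssrfun ssrbool eqtype ssrnat seq div.

Set Implicit Arguments.
Unset Strict Implicit.

(* Finite binary words: seq bool (true = 1).  Infinite words: nat -> bool,
   indexed from 0 (w 0 is the first digit w_1 of the paper). *)

Fixpoint binval_fin (w : seq bool) : R :=
  match w with
  | [::] => 0%R
  | b :: w' => ((if b then / 2 else 0) + binval_fin w' / 2)%R
  end.

Definition binval_inf (w : nat -> bool) : R :=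
  Series (fun i => if w i then ((/ 2) ^ (S i))%R else 0%R).

Definition is_tilde (x : R) (w : nat -> bool) : Prop :=
  binval_inf w = x /\ forall N, exists i, (N <= i)%N /\ w i = true.

(* x~ : the (unique, for x in (0,1]) such expansion *)
Definition tilde (x : R) : nat -> bool :=
  epsilon (inhabits (fun _ => false)) (is_tilde x).

Definition block (k : nat) (w : nat -> bool) (i : nat) : seq bool :=
  mkseq (fun j => w (i * k + j)%N) k.

Definition sigma_word (k : nat) (sigma : seq bool -> seq bool) (r : seq bool)
  : seq bool :=
  flatten (map sigma (reshape (nseq (size r %/ k) k) r)).

Definition is_krounding (k : nat) (w r : seq bool) : Prop :=
  (exists v, r = w ++ v) /\ (k %| size r)%N /\ (size w <= size r)%N /\
  (forall m, (k %| m)%N -> (size w <= m)%N -> (size r <= m)%N).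

Definition strongly_erasing (k : nat) (sigma : seq bool -> seq bool) : Prop :=
  forall w : seq bool, exists rs : seq (seq bool),
    (0 < size rs)%N /\
    is_krounding k w (nth [::] rs 0) /\
    (forall j, (1 <= j < size rs)%N ->
        is_krounding k (sigma_word k sigma (nth [::] rs j.-1)) (nth [::] rs j)) /\
    sigma_word k sigma (nth [::] rs (size rs).-1) = [::].

Definition optimal (k : nat) (sigma : seq bool -> seq bool) : Prop :=
  forall w : nat -> bool, exists b : nat -> seq bool,
    (forall i, size (b i) = k /\ sigma (b i) <> [::]) /\
    (forall n, let u := flatten (map (fun i => sigma (b i)) (iota 0 n)) in
       forall j, (j < size u)%N -> nth false u j = w j).

(* f_sigma; 0.sigma(x~) is the limit of the values of the finite prefixes
   sigma(b_1)...sigma(b_n) (sigma(x~) may be a finite or infinite word). *)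
Definition f_sigma (k : nat) (sigma : seq bool -> seq bool) (weps : seq bool)
  (x : R) : R :=
  if excluded_middle_informative
       ((0 < x <= 1)%R /\ ~ (forall j, tilde x j = nth false weps (j %% k)))
  then real (Lim_seq (fun n =>
         binval_fin (flatten (map (fun i => sigma (block k (tilde x) i))
                                  (iota 0 n)))))
  else 0%R.

(* Main.v *)
Require Import Defs.
From Stdlib Require Import Reals Lra Lia ClassicalEpsilon FunctionalExtensionality.
From Coquelicot Require Import Coquelicot.
From mathcomp Require Import ssreflect ssrfun ssrbool eqtype ssrnat seq div.
From mathcomp Require Import zify.

Local Open Scope R_scope.
Definition bterm (w : nat -> bool) (i : nat) : R :=
  if w i then ((/ 2) ^ (S i))%R else 0%R.

Lemma ex_geo : ex_series (fun i => ((/ 2) ^ (S i))%R).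
Proof.
apply: (ex_series_ext (fun i => / 2 * (/ 2) ^ i)).
  by move=> n.
apply: ex_series_scal_l. exists (/ (1 - / 2)). apply: is_series_geom.
rewrite Rabs_pos_eq; lra.
Qed.

Lemma bterm_bnd w i : 0 <= bterm w i <= (/ 2) ^ (S i).
Proof.
rewrite /bterm; case: (w i); split; try lra.
all: apply: pow_le; lra.
Qed.

Lemma ex_bterm w : ex_series (bterm w).
Proof.
apply: (ex_series_le _ _ _ ex_geo) => n.
rewrite /norm /= /abs /=. rewrite Rabs_pos_eq; apply bterm_bnd.
Qed.

Lemma binval_ext w w' : (forall i, w i = w' i) -> binval_inf w = binval_inf w'.
Proof. move=> H; apply: Series_ext => n; by rewrite H. Qed.

Lemma binval_cons w :
  binval_inf w = (if w 0%N then / 2 else 0) + binval_inf (fun i => w i.+1) / 2.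
Proof.
rewrite /binval_inf. rewrite (Series_incr_1 _ (ex_bterm w)).
rewrite /bterm /=. f_equal; first by case: (w 0%N); rewrite /= ?Rmult_1_r.
rewrite /Rdiv Rmult_comm -Series_scal_l. apply: Series_ext => n.
case: (w n.+1) => /=; ring.
Qed.

Lemma Series0 : Series (fun _ => 0) = 0.
Proof.
rewrite (Series_ext _ (fun n => 0 * 1)); last by move=> n; ring.
rewrite Series_scal_l; ring.
Qed.

Lemma binval_ge0 w : 0 <= binval_inf w.
Proof.
rewrite -Series0.
apply: Series_le; last exact: ex_bterm.
move=> n; split; [lra | apply bterm_bnd].
Qed.

Lemma binval_one : binval_inf (fun _ => true) = 1.
Proof.
rewrite /binval_inf /=.
rewrite Series_scal_l. rewrite (is_series_unique _ (/ (1 - / 2))).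
  field.
apply: is_series_geom. rewrite Rabs_pos_eq; lra.
Qed.

Lemma binval_zero : binval_inf (fun _ => false) = 0.
Proof.
by rewrite /binval_inf /= Series0.
Qed.

Lemma binval_le1 w : binval_inf w <= 1.
Proof.
rewrite -binval_one. apply: (Series_le (bterm w) (bterm (fun _ => true))); last exact: ex_bterm.
move=> n; move: (bterm_bnd w n); rewrite /bterm /=. case: (w n) => //.
Qed.

Definition app (s : seq bool) (W : nat -> bool) (i : nat) : bool :=
  if (i < size s)%N then nth false s i else W (i - size s)%N.

Lemma binval_app s W :
  binval_inf (app s W) = binval_fin s + binval_inf W / 2 ^ size s.
Proof.
elim: s W => [|b s IH] W.
  rewrite /= (binval_ext _ W); last by move=> i; rewrite /app /= subn0.
  field.
rewrite binval_cons /=.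
rewrite (binval_ext _ (app s W)); last first.
  by move=> i; rewrite /app /= ltnS subSS.
rewrite IH /app /=. field. apply: pow_nonzero; lra.
Qed.

Lemma binval_fin_cat s t :
  binval_fin (s ++ t) = binval_fin s + binval_fin t / 2 ^ size s.
Proof.
elim: s => [|b s IH] /=; first field.
rewrite IH; field. apply: pow_nonzero; lra.
Qed.

Lemma binval_fin_bnd s : 0 <= binval_fin s <= 1.
Proof.
elim: s => [|b s IH] /=; first lra.
case: b; lra.
Qed.

Lemma binval_pos w i : w i = true -> 0 < binval_inf w.
Proof.
elim: i w => [|i IH] w H; rewrite binval_cons.
  rewrite H. have := binval_ge0 (fun i => w i.+1). lra.
have := IH (fun i => w i.+1) H.
case: (w 0%N); lra.
Qed.

Definition infones (w : nat -> bool) : Prop :=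
  forall N, exists i, (N <= i)%N /\ w i = true.

Lemma infones_tail w : infones w -> infones (fun i => w i.+1).
Proof.
move=> H N. case: (H N.+1) => [[|i] [Hi Hw]] //.
by exists i.
Qed.

Lemma head_aux w w' : w 0%N = true -> w' 0%N = false -> infones w ->
  binval_inf w <> binval_inf w'.
Proof.
move=> E E' Hinf.
rewrite (binval_cons w) (binval_cons w') E E'.
have := binval_le1 (fun i => w' i.+1).
case: (Hinf 1%N) => [[|i] [Hi Hwi]] //.
have := binval_pos (fun i => w i.+1) i Hwi.
lra.
Qed.

Lemma head_eq w w' : infones w -> infones w' ->
  binval_inf w = binval_inf w' -> w 0%N = w' 0%N.
Proof.
move=> H H' Heq.
case E: (w 0%N); case E': (w' 0%N) => //.
- by case: (head_aux w w' E E' H).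
- by case: (head_aux w' w E' E H').
Qed.

Lemma binval_uniq w w' : infones w -> infones w' ->
  binval_inf w = binval_inf w' -> forall i, w i = w' i.
Proof.
move=> H H' Heq i. elim: i w w' H H' Heq => [|i IH] w w' H H' Heq.
  exact: head_eq.
apply: (IH (fun i => w i.+1) (fun i => w' i.+1)).
- exact: infones_tail.
- exact: infones_tail.
have E := head_eq w w' H H' Heq.
move: Heq. rewrite (binval_cons w) (binval_cons w') E. lra.
Qed.

Lemma tilde_eq w : infones w -> tilde (binval_inf w) = w.
Proof.
move=> H.
have Hs : is_tilde (binval_inf w) (tilde (binval_inf w)).
  rewrite /tilde. apply: epsilon_spec. by exists w.
case: Hs => [Hv Hi].
apply: functional_extensionality. apply: binval_uniq => //.
Qed.

Definition pref (s : seq bool) (W : nat -> bool) : Prop :=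
  forall i, (i < size s)%N -> nth false s i = W i.

Lemma prefix_split s W : pref s W ->
  forall i, W i = app s (fun j => W (j + size s)%N) i.
Proof.
move=> H i; rewrite /app. case: ifP => Hi; first by rewrite H.
by rewrite subnK // leqNgt Hi.
Qed.

Lemma pow2_posR n : (0 < 2 ^ n)%R.
Proof. apply: pow_lt; lra. Qed.

Lemma prefix_bnd s W : pref s W ->
  binval_fin s <= binval_inf W <= binval_fin s + / 2 ^ size s.
Proof.
move=> H. rewrite (binval_ext _ _ (prefix_split _ _ H)) binval_app.
set v := binval_inf _.
have h1 : 0 <= v by apply: binval_ge0.
have h2 : v <= 1 by apply: binval_le1.
have hp := pow2_posR (size s).
split.
  have : 0 <= v / 2 ^ size s by apply: Rdiv_le_0_compat.
  lra.
have : v / 2 ^ size s <= / 2 ^ size s.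
  rewrite /Rdiv. rewrite -{2}(Rmult_1_l (/ 2 ^ size s)).
  apply: Rmult_le_compat_r => //. left; apply: Rinv_0_lt_compat => //.
lra.
Qed.

Lemma inv_pow2_le a b : (a <= b)%N -> / 2 ^ b <= / 2 ^ a.
Proof.
move=> H. apply: Rinv_le_contravar; first exact: pow2_posR.
apply: Rle_pow; first lra. by apply/leP.
Qed.

Lemma lim_prefix (Q : nat -> seq bool) W :
  (forall n, pref (Q n) W) ->
  (forall M, exists n0, forall n, (n0 <= n)%N -> (M <= size (Q n))%N) ->
  Lim_seq (fun n => binval_fin (Q n)) = binval_inf W.
Proof.
move=> HP HS. apply: is_lim_seq_unique. apply/is_lim_seq_spec => eps.
have [M HM] : exists M, / 2 ^ M < eps.
  have [N HN] := pow_lt_1_zero (/ 2) ltac:(rewrite Rabs_pos_eq; lra) eps (cond_pos eps).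
  exists N. have := HN N (le_n N). rewrite pow_inv Rabs_pos_eq //.
  left; apply: Rinv_0_lt_compat; exact: pow2_posR.
case: (HS M) => n0 Hn0. exists n0 => n /leP Hn.
have := prefix_bnd _ _ (HP n). have := inv_pow2_le _ _ (Hn0 n Hn).
move=> h1 h2. rewrite Rabs_minus_sym Rabs_pos_eq; lra.
Qed.

Local Close Scope R_scope.
Section Comb.
Variable k : nat.
Variable sigma : seq bool -> seq bool.
Variable weps : seq bool.
Hypothesis Hk : (0 < k)%N.
Hypothesis Hw : size weps = k.
Hypothesis Hs : forall b : seq bool, size b = k -> (sigma b = [::] <-> b = weps).

Definition P (S : nat -> bool) n :=
  flatten (map (fun i => sigma (block k S i)) (iota 0 n)).

Lemma P_add S n d : P S (n + d) =
  P S n ++ flatten (map (fun i => sigma (block k S i)) (iota n d)).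
Proof. by rewrite /P iotaD map_cat flatten_cat. Qed.

Lemma P_mono S n n' : (n <= n')%N -> exists t, P S n' = P S n ++ t.
Proof. move=> H. rewrite -(subnKC H) P_add. by eexists. Qed.

Lemma prefix_cat s t W : pref (s ++ t) W -> pref s W.
Proof.
move=> H i Hi. rewrite -H ?nth_cat ?Hi // size_cat. by apply: leq_trans Hi (leq_addr _ _).
Qed.

Lemma prefix_app s t W : pref t W -> pref (s ++ t) (app s W).
Proof.
move=> H i Hi. rewrite /app nth_cat. case: ifP => // Hl.
rewrite H //. rewrite size_cat in Hi. lia.
Qed.

Lemma block_app_lo r U m i : size r = (m * k)%N -> (i < m)%N ->
  block k (app r U) i = mkseq (fun j => nth false r (i * k + j)) k.
Proof.
move=> Hr Hi. rewrite /block. apply: (@eq_from_nth _ false); rewrite !size_mkseq // => j Hj.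
rewrite !nth_mkseq // /app Hr. have -> : (i * k + j < m * k)%N by nia. by [].
Qed.

Lemma block_app_hi r U m i : size r = (m * k)%N ->
  block k (app r U) (m + i) = block k U i.
Proof.
move=> Hr. rewrite /block. apply: (@eq_from_nth _ false); rewrite !size_mkseq // => j Hj.
rewrite !nth_mkseq // /app Hr. have -> : ((m + i) * k + j < m * k)%N = false by nia.
f_equal. by rewrite mulnDl -addnA addKn.
Qed.

Lemma sigma_word_eq r U m : size r = (m * k)%N -> sigma_word k sigma r = P (app r U) m.
Proof.
move=> Hr. rewrite /sigma_word /P Hr mulnK //. f_equal.
have -> : reshape (nseq m k) r = map (fun i => block k (app r U) i) (iota 0 m).
  apply: (@eq_from_nth _ [::]).
    by rewrite size_map size_iota size_reshape size_nseq.
  rewrite size_reshape size_nseq => i Hi.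
  rewrite (nth_map 0%N) ?size_iota // nth_iota // add0n.
  rewrite (block_app_lo _ _ m) // nth_reshape nth_nseq Hi take_nseq ?sumn_nseq; last by lia.
  have Hik : (k * i + k <= m * k)%N by nia.
  apply: (@eq_from_nth _ false).
    rewrite size_take size_drop size_mkseq Hr. case: ifP => //; lia.
  move=> j. rewrite size_take size_drop Hr => Hj.
  have Hj' : (j < k)%N by move: Hj; case: ifP => H0 //; lia.
  rewrite nth_take // nth_drop nth_mkseq //. f_equal. lia.
by rewrite -map_comp.
Qed.

Lemma P_app r U m i : size r = (m * k)%N ->
  P (app r U) (m + i) = sigma_word k sigma r ++ P U i.
Proof.
move=> Hr. rewrite P_add -(sigma_word_eq _ U m) //. f_equal.
rewrite /P. f_equal. rewrite -{1}(addn0 m) iotaDl -map_comp. apply: eq_map => j /=.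
by rewrite block_app_hi.
Qed.


Definition inter (b : nat -> seq bool) (j : nat) : bool :=
  if odd (j %/ k) then nth false weps (j %% k) else nth false (b (j %/ k)./2) (j %% k).

Lemma divmod_k q j : (j < k)%N -> (q * k + j) %/ k = q /\ (q * k + j) %% k = j.
Proof.
move=> Hj. rewrite divnMDl // divn_small // addn0. split => //.
by rewrite modnMDl modn_small.
Qed.

Lemma block_inter_even b i : size (b i) = k -> block k (inter b) i.*2 = b i.
Proof.
move=> Hb. apply: (@eq_from_nth _ false); rewrite size_mkseq // => j Hj.
rewrite nth_mkseq // /inter. have [-> ->] := divmod_k i.*2 j Hj.
by rewrite odd_double doubleK.
Qed.

Lemma block_inter_odd b i : block k (inter b) i.*2.+1 = weps.
Proof.
apply: (@eq_from_nth _ false); rewrite size_mkseq // => j Hj.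
rewrite nth_mkseq // /inter. have [-> ->] := divmod_k i.*2.+1 j Hj.
by rewrite /= odd_double.
Qed.

Lemma sigma_weps : sigma weps = [::].
Proof. by apply/Hs. Qed.

Lemma P_inter b n : (forall i, size (b i) = k) ->
  P (inter b) n.*2 = flatten (map (fun i => sigma (b i)) (iota 0 n)).
Proof.
move=> Hb. elim: n => [|n IH] //.
rewrite doubleS -addn2 P_add IH.
rewrite -[n.+1]addn1 iotaD map_cat flatten_cat /= add0n.
by rewrite block_inter_even // block_inter_odd sigma_weps /=.
Qed.

Lemma size_flat b n : (forall i, sigma (b i) <> [::]) ->
  (n <= size (flatten (map (fun i => sigma (b i)) (iota 0 n))))%N.
Proof.
move=> Hb. elim: n => [|n IH] //.
rewrite -addn1 iotaD map_cat flatten_cat size_cat /= cats0.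
have : (0 < size (sigma (b (0 + n)%N)))%N.
  case E: (sigma _) => //. by case: (Hb (0 + n)%N).
lia.
Qed.

Lemma nonweps_true s : size s = k -> s <> weps -> ~~ has id weps -> has id s.
Proof.
move=> Hsz Hne Hw0. apply/negP => Hs0. apply: Hne.
apply: (@eq_from_nth _ false); first by rewrite Hsz Hw.
move=> j Hj. move/hasPn: Hw0 => Hw0. move/negP/hasPn: Hs0 => Hs0.
have h1 := Hs0 _ (mem_nth false Hj).
have h2 : (j < size weps)%N by rewrite Hw -Hsz.
have h3 := Hw0 _ (mem_nth false h2).
move: h1 h3. by case: (nth _ s j); case: (nth _ weps j).
Qed.

Lemma infones_inter r b : (forall i, size (b i) = k /\ sigma (b i) <> [::]) ->
  infones (app r (inter b)).
Proof.
move=> Hb N.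
have H : exists p, (N <= p)%N /\ inter b p = true.
  case Hwt: (has id weps).
    move/(has_nthP false): Hwt => [j Hj Hwj]. rewrite Hw in Hj.
    exists (N.*2.+1 * k + j)%N. split; first by nia.
    rewrite /inter. have [-> ->] := divmod_k N.*2.+1 j Hj. by rewrite /= odd_double.
  case: (Hb N) => Hsz Hne.
  have Hne' : b N <> weps by move=> E; apply: Hne; rewrite E sigma_weps.
  have := nonweps_true _ Hsz Hne' (negbT Hwt).
  move/(has_nthP false) => [j Hj Hbj]. rewrite Hsz in Hj.
  exists (N.*2 * k + j)%N. split; first by nia.
  rewrite /inter. have [-> ->] := divmod_k N.*2 j Hj. by rewrite odd_double doubleK.
case: H => p [Hp Hpt]. exists (size r + p)%N. split; first lia.
rewrite /app. have -> : (size r + p < size r)%N = false by lia.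
by rewrite addKn.
Qed.


Lemma step r m W b : size r = (m * k)%N ->
  (forall i, size (b i) = k /\ sigma (b i) <> [::]) ->
  (forall n, pref (flatten (map (fun i => sigma (b i)) (iota 0 n))) W) ->
  f_sigma k sigma weps (binval_inf (app r (inter b))) =
  binval_inf (app (sigma_word k sigma r) W).
Proof.
move=> Hr Hb HW.
set S := app r (inter b).
have Hinf : infones S by apply: infones_inter.
have Hbs : forall i, size (b i) = k by move=> i; case: (Hb i).
have Hbn : forall i, sigma (b i) <> [::] by move=> i; case: (Hb i).
have Hpos : (0 < binval_inf S)%R.
  case: (Hinf 0%N) => i [_ Hi]. exact: (binval_pos _ i Hi).
have Htl : tilde (binval_inf S) = S by apply: tilde_eq.
rewrite /f_sigma Htl. destruct (excluded_middle_informative _) as [Hcond|Hc]; last first.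
  exfalso; apply: Hc; split; first by split; [lra | apply: binval_le1].
  move=> Hper.
  have Hbl : block k S m = weps.
    apply: (@eq_from_nth _ false); first by rewrite size_mkseq Hw.
    rewrite size_mkseq => j Hj. rewrite nth_mkseq // Hper.
    by have [_ ->] := divmod_k m j Hj.
  move: Hbl. rewrite /S -[m]addn0 block_app_hi // -[0%N]/(0.*2) block_inter_even //.
  move=> E. by apply: (Hbn 0%N); rewrite E sigma_weps.
have HL := lim_prefix (P S) (app (sigma_word k sigma r) W).
rewrite /P in HL. rewrite HL //.
- move=> n. have [t Ht] := P_mono S n (m + n.*2) ltac:(lia).
  apply: (prefix_cat _ t). rewrite -/(P S n) -Ht /S P_app // P_inter //.
  exact: prefix_app.
- move=> M. exists (m + M.*2)%N => n Hn.
  have [t Ht] := P_mono S _ n Hn. rewrite -/(P S n) Ht size_cat /S P_app // P_inter //.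
  rewrite size_cat. have := size_flat b M Hbn. lia.
Qed.

End Comb.

Local Open Scope R_scope.
Lemma app_cat s t W i : app s (app t W) i = app (s ++ t) W i.
Proof.
rewrite /app size_cat nth_cat.
case: ifP => H1; first by have -> : (i < size s + size t)%N by lia.
case: ifP => H2; case: ifP => H3 //; try lia.
f_equal. lia.
Qed.

Lemma app_nil W i : app [::] W i = W i.
Proof. by rewrite /app /= subn0. Qed.

Lemma bisect x : (0 <= x <= 1)%R -> forall m, exists p,
  size p = m /\ (binval_fin p <= x <= binval_fin p + / 2 ^ m)%R.
Proof.
move=> Hx. elim => [|m [p [Hp [H1 H2]]]].
  exists [::]. split => //=. lra.
have hp := pow2_posR m.
have E : (/ 2 ^ m.+1 = / 2 ^ m / 2)%R.
  rewrite /=. field. lra.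
case: (Rlt_le_dec x (binval_fin p + / 2 ^ m.+1)) => Hc.
  exists (p ++ [:: false]). rewrite size_cat Hp addn1 binval_fin_cat /= Hp. split => //.
  rewrite E in Hc *. split; lra.
exists (p ++ [:: true]). rewrite size_cat Hp addn1 binval_fin_cat /= Hp. split => //.
rewrite E in Hc *.
have : (/ 2 + 0 / 2) / 2 ^ m = / 2 ^ m / 2 by field; lra.
split; lra.
Qed.

Lemma app_ext_val s t W : binval_inf (app s (app t W)) = binval_inf (app (s ++ t) W).
Proof. apply: binval_ext => i; exact: app_cat. Qed.

Theorem lemma4p4 (k : nat) (sigma : seq bool -> seq bool) (weps : seq bool) :
  (2 <= k)%N ->
  size weps = k ->
  (forall b : seq bool, size b = k -> (sigma b = [::] <-> b = weps)) ->
  weps <> nseq k true ->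
  strongly_erasing k sigma ->
  optimal k sigma ->
  forall (x delta : R), (0 <= x <= 1)%R -> (0 < delta)%R ->
  exists (z : R) (n : nat),
    (0 <= z <= 1)%R /\ (Rabs (x - z) < delta)%R /\
    (Rabs (iter n (f_sigma k sigma weps) x - iter n (f_sigma k sigma weps) z)
       >= 1 / 2)%R.
Proof.
move=> Hk2 Hw Hs _ Hse Hopt x delta Hx Hd.
have Hk : (0 < k)%N by lia.
set f := f_sigma k sigma weps.
have [m Hm] : exists m, / 2 ^ m < delta.
  have [N HN] := pow_lt_1_zero (/ 2) ltac:(rewrite Rabs_pos_eq; lra) delta Hd.
  exists N. have := HN N (le_n N). rewrite pow_inv Rabs_pos_eq //.
  left; apply: Rinv_0_lt_compat; exact: pow2_posR.
have [p [Hp [Hp1 Hp2]]] := bisect x Hx m.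
have [rs [Hrs0 [Hr0 [Hrj Hlast]]]] := Hse p.
set N := size rs.
set r := fun j => nth [::] rs j.
have Hdiv : forall j, (j < N)%N -> exists mm, size (r j) = (mm * k)%N.
  move=> j Hj. exists (size (r j) %/ k). rewrite divnK //.
  case: j Hj => [|j] Hj.
    by case: Hr0 => _ [].
  by case: (Hrj j.+1 ltac:(lia)) => _ [].
have chain : forall T : nat -> bool, forall d, (d < N)%N -> exists U,
    iter d.+1 f (binval_inf (app (r (N.-1 - d)%N) U)) = binval_inf T.
  move=> T. elim => [|d IH] Hd'.
    have [b [Hb Hpre]] := Hopt T.
    have [mm Hmm] := Hdiv (N.-1 - 0)%N ltac:(lia).
    exists (inter k weps b). rewrite /= /f (step k sigma weps Hk Hw Hs _ mm T) //.
      apply: binval_ext => i. by rewrite subn0 /r Hlast app_nil.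
  have [U' HU'] := IH ltac:(lia).
  set j := (N.-1 - d.+1)%N.
  have Hj1 : (N.-1 - d = j.+1)%N by rewrite /j; lia.
  case: (Hrj j.+1 ltac:(lia)) => [[v Hv] _].
  rewrite /= in Hv.
  have [b [Hb Hpre]] := Hopt (app v U').
  have [mm Hmm] := Hdiv j ltac:(lia).
  exists (inter k weps b). rewrite iterSr.
  rewrite /f (step k sigma weps Hk Hw Hs _ mm (app v U')) //.
    rewrite app_ext_val -/f. rewrite Hj1 in HU'. rewrite /r -Hv. exact: HU'.
have [U0 H0] := chain (fun _ => false) N.-1 ltac:(lia).
have [U1 H1] := chain (fun _ => true) N.-1 ltac:(lia).
rewrite binval_zero in H0. rewrite binval_one in H1.
have Hn : N.-1.+1 = N by lia.
rewrite subnn Hn in H0 H1.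
case: Hr0 => [[v0 Hv0] _].
have close : forall U, 0 <= binval_inf (app (r 0%N) U) <= 1 /\
    Rabs (x - binval_inf (app (r 0%N) U)) < delta.
  move=> U. split; first by split; [apply: binval_ge0 | apply: binval_le1].
  rewrite /r Hv0 -app_ext_val binval_app Hp.
  have := binval_ge0 (app v0 U). have := binval_le1 (app v0 U).
  have hp := pow2_posR m.
  move=> h1 h2.
  have h3 : 0 <= binval_inf (app v0 U) / 2 ^ m by apply: Rdiv_le_0_compat.
  have h4 : binval_inf (app v0 U) / 2 ^ m <= / 2 ^ m.
    rewrite /Rdiv -{2}(Rmult_1_l (/ 2 ^ m)). apply: Rmult_le_compat_r => //.
    left; apply: Rinv_0_lt_compat => //.
  apply: Rabs_def1; lra.
case: (Rle_lt_dec (1 / 2) (Rabs (iter N f x))) => Ha.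
  exists (binval_inf (app (r 0%N) U0)), N.
  have [c1 c2] := close U0. split => //. split => //.
  rewrite -/f H0 Rminus_0_r. lra.
exists (binval_inf (app (r 0%N) U1)), N.
have [c1 c2] := close U1. split => //. split => //.
rewrite -/f H1. move: Ha. 
case: (Rle_lt_dec 0 (iter N f x)) => h.
  rewrite Rabs_pos_eq // => Ha. rewrite Rabs_minus_sym Rabs_pos_eq; lra.
rewrite Rabs_left // => Ha. rewrite Rabs_minus_sym Rabs_pos_eq; lra.
Qed.
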